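(* For any Banach spaces $X$ and $Y$, $d_K(X^*,Y^* )\le 2\,d_K(X,Y)$.
   Context: $B_X$ is the closed unit ball of $X$. The Kadets distance $d_K(X,Y)$ is the infimum, over all Banach spaces $Z$ and all linear isometric embeddings $U:X\to Z$, $V:Y\to Z$, of the Hausdorff distance between $UB_X$ and $VB_Y$ in $Z$. *)

(* Defs.v *)
From mathcomp Require Import all_boot all_algebra all_classical all_reals all_analysis.
Import GRing.Theory Num.Theory.
Local Open Scope ring_scope.
Local Open Scope classical_set_scope.


(* A normed space presented inside an ambient R-vector space [pn_vec]:
   its points are the elements of the linear subspace [pn_dom], with norm
   [pn_norm].  This lets us treat both a normed space X itself and its dual
   X^* (a subspace of the functions X -> R) uniformly. *)
Record pnspace (R : realType) := PNSpace {
  pn_vec : lmodType R ;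
  pn_dom : set pn_vec ;
  pn_norm : pn_vec -> R }.
Arguments PNSpace {R} pn_vec pn_dom pn_norm.
Arguments pn_vec {R} p.
Arguments pn_dom {R} p _.
Arguments pn_norm {R} p _.

Definition nspace_of {R : realType} (X : normedModType R) : pnspace R :=
  PNSpace X setT (fun x : X => `|x|).

Definition dual_space {R : realType} (X : normedModType R) : pnspace R :=
  PNSpace (X -> R^o)
    [set f : X -> R^o | (forall (a : R) (x y : X), f (a *: x + y) = a * f x + f y)
                        /\ continuous f]
    (fun f : X -> R^o => sup [set `|f x| | x in [set x : X | `|x| <= 1]]).

Definition unit_ball {R : realType} (E : pnspace R) : set (pn_vec E) :=
  [set u : pn_vec E | pn_dom E u /\ pn_norm E u <= 1].

Definition lin_isometry {R : realType} {E : pnspace R} {Z : normedModType R}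
    (U : pn_vec E -> Z) : Prop :=
  (forall (a : R) (u v : pn_vec E), pn_dom E u -> pn_dom E v ->
      U (a *: u + v) = a *: U u + U v)
  /\ (forall u, pn_dom E u -> `|U u| = pn_norm E u).

(* distance from a point to a set, and Hausdorff distance (for nonempty
   bounded sets, which is the only case used). *)
Definition dist_to {R : realType} {Z : normedModType R} (z : Z) (B : set Z) : R :=
  inf [set `|z - b| | b in B].

Definition hausdorff_dist {R : realType} {Z : normedModType R} (A B : set Z) : R :=
  Num.max (sup [set dist_to a B | a in A]) (sup [set dist_to b A | b in B]).

Definition kadets_dist {R : realType} (E F : pnspace R) : R :=
  inf [set r : R | exists (Z : completeNormedModType R)
                          (U : pn_vec E -> Z) (V : pn_vec F -> Z),
         lin_isometry U /\ lin_isometry V /\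
         r = hausdorff_dist (U @` unit_ball E) (V @` unit_ball F)].

(* Main.v *)
Require Import Defs.
From HB Require Import structures.
From mathcomp Require Import all_boot all_order all_algebra all_classical all_reals all_analysis.
From mathcomp Require Import ring lra.
Import GRing.Theory Num.Theory Order.TTheory.
Import numFieldNormedType.Exports.
Local Open Scope ring_scope.
Local Open Scope classical_set_scope.


Lemma sup_le_gen {R : realType} (E : set R) M : 0 <= M -> ubound E M -> sup E <= M.
Proof.
move=> M0 EM; case: (pselect (E !=set0)) => [h|h]; first exact: ge_sup.
have -> : E = set0 by apply/seteqP; split=> x Ex //; apply: h; exists x.
by rewrite sup0.
Qed.

Lemma sup_ge0_gen {R : realType} (E : set R) : (forall x, E x -> 0 <= x) -> 0 <= sup E.
Proof.
move=> E0; case: (pselect (has_sup E)) => [[[x Ex] ub]|h]; last by rewrite sup_out.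
exact: le_trans (E0 _ Ex) (ub_le_sup ub Ex).
Qed.

Section BF.
Variables (R : realType) (T : Type).

Definition bnd : {pred T -> R^o} := fun f => `[< exists M : R, forall t, `|f t| <= M >].
Definition bnd_key : pred_key bnd. Proof. exact. Qed.
Canonical bnd_keyed := KeyedPred bnd_key.

Lemma bndP (f : T -> R^o) : reflect (exists M : R, forall t, `|f t| <= M) (f \in bnd).
Proof. exact: asboolP. Qed.

Lemma bnd_submod_closed : submod_closed bnd.
Proof.
split.
  by apply/bndP; exists 0 => t; rewrite normr0.
move=> a f g /bndP[M fM] /bndP[N gN]; apply/bndP; exists (`|a| * M + N) => t.
rewrite /= (le_trans (ler_normD _ _))// lerD// normrM ler_wpM2l//.
Qed.

HB.instance Definition _ := GRing.isSubmodClosed.Build _ _ bnd bnd_submod_closed.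

Record bfun := BFun { bf_val : T -> R^o; bf_valP : bf_val \in bnd }.
HB.instance Definition _ := [isSub for bf_val].
HB.instance Definition _ := [Choice of bfun by <:].
HB.instance Definition _ := [SubChoice_isSubLmodule of bfun by <:].

Definition bnorm (f : bfun) : R := sup [set `|bf_val f t| | t in [set: T]].

Lemma bnorm_ub (f : bfun) t : `|bf_val f t| <= bnorm f.
Proof.
apply: ub_le_sup; last by exists t.
have /bndP[M fM] := bf_valP f.
by exists M => _ [s _ <-].
Qed.

Lemma bnorm_le (f : bfun) M : 0 <= M -> (forall t, `|bf_val f t| <= M) -> bnorm f <= M.
Proof. by move=> M0 fM; apply: sup_le_gen => // _ [t _ <-]. Qed.

Lemma bnorm_ge0 (f : bfun) : 0 <= bnorm f.
Proof. by apply: sup_ge0_gen => _ [t _ <-]. Qed.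

Lemma bf_valD (f g : bfun) t : bf_val (f + g) t = bf_val f t + bf_val g t.
Proof. by []. Qed.
Lemma bf_valZ (a : R) (f : bfun) t : bf_val (a *: f) t = a * bf_val f t.
Proof. by []. Qed.
Lemma bf_valN (f : bfun) t : bf_val (- f) t = - bf_val f t.
Proof. by []. Qed.
Lemma bf_valB (f g : bfun) t : bf_val (f - g) t = bf_val f t - bf_val g t.
Proof. by []. Qed.
Lemma bf_val0 t : bf_val (0 : bfun) t = 0.
Proof. by []. Qed.

Lemma bnormD (f g : bfun) : bnorm (f + g) <= bnorm f + bnorm g.
Proof.
apply: bnorm_le; first by rewrite addr_ge0 // bnorm_ge0.
move=> t; by rewrite bf_valD (le_trans (ler_normD _ _))// lerD ?bnorm_ub.
Qed.

Lemma bnormZ (l : R) (f : bfun) : bnorm (l *: f) = `|l| * bnorm f.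
Proof.
apply/eqP; rewrite eq_le; apply/andP; split.
  apply: bnorm_le; first by rewrite mulr_ge0 // bnorm_ge0.
  by move=> t; rewrite bf_valZ normrM ler_wpM2l // bnorm_ub.
have [->|l0] := eqVneq l 0; first by rewrite normr0 mul0r bnorm_ge0.
rewrite -ler_pdivlMl ?normr_gt0 //; apply: bnorm_le.
  by rewrite mulr_ge0 ?invr_ge0 // bnorm_ge0.
by move=> t; rewrite ler_pdivlMl ?normr_gt0 // -normrM -bf_valZ bnorm_ub.
Qed.

Lemma bnorm0_eq0 (f : bfun) : bnorm f = 0 -> f = 0.
Proof.
move=> f0; apply: val_inj; apply/funext => t /=.
apply/eqP; rewrite -normr_eq0 eq_le normr_ge0 andbT.
by rewrite -f0 bnorm_ub.
Qed.

HB.instance Definition _ := Lmodule_isNormed.Build R bfun bnormD bnormZ bnorm0_eq0.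

Lemma bf_normE (f : bfun) : `|f| = bnorm f.
Proof. by []. Qed.

Lemma bf_complete (F : set_system bfun) : ProperFilter F -> cauchy F -> cvg F.
Proof.
move=> FF /cauchyP Fc.
pose ev t := fun f : bfun => bf_val f t.
have evc t : cvg (ev t @ F).
  apply: cauchy_cvg; apply/cauchyP => eps eps0.
  have [x Fx] := Fc eps eps0; exists (bf_val x t).
  change (F [set y | ball (bf_val x t) eps (bf_val y t)]).
  apply: filterS Fx => y; rewrite -!ball_normE /ball_ /= => xy.
  by rewrite -bf_valB (le_lt_trans (bnorm_ub _ _)).
pose g t := lim (ev t @ F).
have key eps x : 0 < eps -> F (ball x eps) -> forall y, ball x eps y ->
    forall t, `|bf_val y t - g t| <= eps + eps.
  move=> eps0 Fx y xy t; apply/ler_addgt0Pr => d d0.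
  have /cvgrPdist_lt/(_ d d0) := evc t => Fg.
  have [y' [/= xy' gy']] := filter_ex (filterI Fx Fg).
  move: xy xy'; rewrite -ball_normE /ball_ /= => xy xy'.
  have e1 : `|bf_val y t - bf_val x t| < eps.
    by rewrite distrC -bf_valB (le_lt_trans (bnorm_ub _ _)).
  have e2 : `|bf_val x t - bf_val y' t| < eps.
    by rewrite -bf_valB (le_lt_trans (bnorm_ub _ _)).
  have e3 : `|bf_val y' t - g t| < d by rewrite distrC.
  have : `|bf_val y t - g t| <= `|bf_val y t - bf_val x t| + `|bf_val x t - bf_val y' t| + `|bf_val y' t - g t|.
    rewrite (le_trans _ (lerD (ler_normD _ _) (lexx _)))//.
    by rewrite (le_trans _ (ler_normD _ _))// !subrKA.
  move/le_trans; apply; apply: ltW; rewrite ltrD // ltrD //.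
have gb : g \in bnd.
  have [x Fx] := Fc 1 ltr01.
  apply/bndP; exists (bnorm x + (1 + 1)) => t.
  have := key 1 x ltr01 Fx x (ballxx _ ltr01) t.
  move=> h; have -> : g t = bf_val x t + (g t - bf_val x t) by rewrite addrC subrK.
  by rewrite (le_trans (ler_normD _ _))// lerD // ?bnorm_ub // distrC.
apply/cvg_ex; exists (BFun g gb).
apply/cvgrPdist_le => eps eps0.
have [x Fx] := Fc (eps / 2) (divr_gt0 eps0 (ltr0n _ 2)).
have Fx2 := Fx; apply: filterS Fx2 => y xy; rewrite bf_normE; apply: bnorm_le; first exact: ltW.
move=> t; rewrite bf_valB /= distrC.
by rewrite (le_trans (key _ x (divr_gt0 eps0 (ltr0n _ 2)) Fx y xy t))// -splitr.
Qed.

HB.instance Definition _ := Uniform_isComplete.Build bfun bf_complete.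

End BF.
Arguments bndP {R T}.
Arguments bnorm {R T}.
Arguments bnorm_ub {R T}.
Arguments bnorm_le {R T}.
Arguments bf_valB {R T}.
Arguments bf_normE {R T}.
Arguments bf_val {R T}.



Section HahnBanach.
Variables (R : realType) (Z : normedModType R).

Definition good (G : set (Z * R)) :=
  [/\ (forall z a b, G (z, a) -> G (z, b) -> a = b),
      (forall (t : R) z a w b, G (z, a) -> G (w, b) -> G (t *: z + w, t * a + b)) &
      (forall z a, G (z, a) -> a <= `|z|) ].

Lemma good_extend (H : set (Z * R)) m1 a1 z0 :
  good H -> H (m1, a1) -> (forall a, ~ H (z0, a)) ->
  exists c, good [set p | exists m a t, H (m, a) /\ p = (m + t *: z0, a + t * c)].
Proof.
move=> [Hf Hl Hd] H1 Hz0.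
have Hsc t m a : H (m, a) -> H (t *: m, t * a).
  move=> Hma; have H00 : H (0, 0).
    by have := Hl (-1) _ _ _ _ Hma Hma; rewrite scaleN1r mulN1r !addNr.
  by have := Hl t _ _ _ _ Hma H00; rewrite addr0 addr0.
have Hadd m a m' b : H (m, a) -> H (m', b) -> H (m + m', a + b).
  by move=> h1 h2; have := Hl 1 _ _ _ _ h1 h2; rewrite scale1r mul1r.
pose L := [set x | exists m a, H (m, a) /\ x = a - `|m - z0|].
have Lub m2 a2 : H (m2, a2) -> ubound L (`|m2 + z0| - a2).
  move=> h2 _ [m [a [h ->]]]; rewrite lerBrDr addrAC lerBlDr.
  have := Hd _ _ (Hadd _ _ _ _ h h2) => /le_trans; apply.
  have -> : m + m2 = (m2 + z0) + (m - z0) by rewrite addrACA subrr addr0 addrC.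
  exact: ler_normD.
have Lne : L !=set0 by exists (a1 - `|m1 - z0|); exists m1, a1.
pose c := sup L.
have cub m a : H (m, a) -> c <= `|m + z0| - a.
  by move=> h; apply: ge_sup => //; exact: Lub h.
have clb m a : H (m, a) -> a - `|m - z0| <= c.
  move=> h; apply: ub_le_sup; last by exists m, a.
  by exists (`|m1 + z0| - a1); exact: Lub H1.
exists c; split.
- move=> _ a' b' [m [a [t [h [-> ->]]]]] [m' [b [t' [h' [e ->]]]]].
  have [tt'|tt'] := eqVneq t t'.
    subst t'; have mm' : m = m' by move/addIr: e.
    by subst m'; rewrite (Hf _ _ _ h h').
  exfalso; apply: (Hz0 ((t - t')^-1 * (b - a))).
  have eq1 : m' - m = (t - t') *: z0.
    have -> : m' = m + t *: z0 - t' *: z0 by rewrite e addrK.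
    by rewrite scalerBl addrAC [m + _]addrC addrK.
  have hd := Hl (-1) _ _ _ _ h h'; rewrite scaleN1r mulN1r addrC [- a + _]addrC in hd.
  have := Hsc ((t - t')^-1) _ _ hd; rewrite eq1 scalerA mulVf ?scale1r //.
  by rewrite subr_eq0.
- move=> s _ _ _ _ [m [a [t [h [-> ->]]]]] [m' [b [t' [h' [-> ->]]]]].
  exists (s *: m + m'), (s * a + b), (s * t + t'); split; first exact: Hl.
  congr (_, _).
    by rewrite scalerDr scalerDl scalerA addrACA.
  by rewrite mulrDr mulrDl mulrA addrACA.
- move=> _ _ [m [a [t [h [-> ->]]]]].
  have [t0|t0|->] := ltgtP t 0; last by rewrite scale0r mul0r !addr0; exact: Hd h.
  + pose s := - t; have s0 : 0 < s by rewrite oppr_gt0.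
    have := clb _ _ (Hsc (s^-1) _ _ h).
    rewrite -(ler_pM2l s0) mulrBr mulrA mulfV ?gt_eqF // mul1r.
    have -> : s * `|s^-1 *: m - z0| = `|m + t *: z0|.
      rewrite -{1}[s]gtr0_norm // -normrZ scalerBr scalerA mulfV ?gt_eqF //.
      by rewrite scale1r /s scaleNr opprK.
    by rewrite lerBlDr -lerBlDl /s mulNr opprK addrC.
  + have := cub _ _ (Hsc (t^-1) _ _ h).
    rewrite -(ler_pM2l t0) mulrBr mulrA mulfV ?gt_eqF // mul1r.
    have -> : t * `|t^-1 *: m + z0| = `|m + t *: z0|.
      rewrite -{1}[t]gtr0_norm // -normrZ scalerDr scalerA mulfV ?gt_eqF //.
      by rewrite scale1r.
    by rewrite lerBrDl.
Qed.


Lemma hahn_banach (G0 : set (Z * R)) : good G0 -> G0 !=set0 ->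
  exists F : Z -> R, [/\ (forall (t : R) z w, F (t *: z + w) = t * F z + F w),
    (forall z a, G0 (z, a) -> F z = a) & (forall z, F z <= `|z|)].
Proof.
move=> gG0 [[z1 a1] G01].
pose P := fun G : set (Z * R) => good (G0 `|` G).
have P0 : P set0 by rewrite /P setU0.
have chainP : forall FF : set (set (Z * R)), FF `<=` P -> total_on FF subset ->
    P (\bigcup_(X in FF) X).
  move=> FF FP Ftot.
  have two p q : (G0 `|` \bigcup_(X in FF) X) p -> (G0 `|` \bigcup_(X in FF) X) q ->
      exists X, [/\ P X, (G0 `|` X) p, (G0 `|` X) q & G0 `|` X `<=` G0 `|` \bigcup_(X in FF) X].
    have subF X : FF X -> G0 `|` X `<=` G0 `|` \bigcup_(X in FF) X.
      by move=> FX r [h|h]; [left|right; exists X].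
    have sub0 : G0 `|` set0 `<=` G0 `|` \bigcup_(X in FF) X.
      by move=> r [h|//]; left.
    case=> [p0|[Xp Fp Xpp]]; case=> [q0|[Xq Fq Xqq]].
    - by exists set0; split => //; left.
    - by exists Xq; split => //; [exact: FP|left|right|exact: subF].
    - by exists Xp; split => //; [exact: FP|right|left|exact: subF].
    - have [XpXq|XqXp] := Ftot _ _ Fp Fq.
        by exists Xq; split; [exact: FP|right; exact: XpXq|right|exact: subF].
      by exists Xp; split; [exact: FP|right|right; exact: XqXp|exact: subF].
  split.
  - move=> z a b hp hq; have [X [[Xf _ _] hp' hq' _]] := two _ _ hp hq.
    exact: Xf hp' hq'.
  - move=> t z a w b hp hq; have [X [[_ Xl _] hp' hq' XU]] := two _ _ hp hq.
    exact/XU/Xl.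
  - move=> z a hp; have [X [[_ _ Xd] hp' _ _]] := two _ _ hp hp.
    exact: Xd hp'.
have [A [PA Amax]] := Zorn_bigcup chainP.
pose H := G0 `|` A.
have full : forall z, exists a, H (z, a).
  move=> z0; apply: contrapT => nz.
  have nz' : forall a, ~ H (z0, a) by move=> a h; apply: nz; exists a.
  have [c gH'] := @good_extend H z1 a1 z0 PA (or_introl G01) nz'.
  set H' := [set p | _] in gH'.
  have HH' : H `<=` H'.
    by move=> [m a] h; exists m, a, 0; split => //; rewrite scale0r mul0r !addr0.
  apply: (Amax H').
    split; first by move=> p Ap; apply: HH'; right.
    move=> H'A; have : A (z0, c).
      apply: H'A; exists 0, 0, 1; split; last by rewrite scale1r mul1r !add0r.
      by case: PA => _ Hl _; have := Hl (-1) _ _ _ _ (or_introl G01) (or_introl G01); rewrite scaleN1r mulN1r !addNr.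
    by move=> Az0; apply: (nz' c); right.
  by rewrite /P setUidr // => p G0p; apply: HH'; left.
have [F HF] := choice full.
case: PA => Hf Hl Hd.
exists F; split.
- by move=> t z w; apply: Hf (HF _) _; apply: Hl; apply: HF.
- by move=> z a G0za; apply: Hf (HF _) _; left.
- by move=> z; apply: Hd (HF z).
Qed.
End HahnBanach.
Arguments good {R Z}.
Arguments hahn_banach {R Z}.


Section ProdComplete.
Variables (R : realType) (X Y : completeNormedModType R).
HB.instance Definition _ := Pointed.on (X * Y)%type.
Lemma prod_ballE (x y : X * Y) e : ball x e y -> ball x.1 e y.1 /\ ball x.2 e y.2.
Proof. by []. Qed.
Lemma prod_ballI (x y : X * Y) e : ball x.1 e y.1 -> ball x.2 e y.2 -> ball x e y.
Proof. by move=> h1 h2; split. Qed.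
Lemma prod_complete (F : set_system (X * Y)%type) : ProperFilter F -> cauchy F -> cvg F.
Proof.
move=> FF /cauchyP Fc.
have c1 : cvg (fst @ F).
  apply: cauchy_cvg; apply/cauchyP => e e0; have [x Fx] := Fc e e0; exists x.1.
  change (F [set y | ball x.1 e y.1]).
  by apply: filterS Fx => y /prod_ballE [h _]; exact: h.
have c2 : cvg (snd @ F).
  apply: cauchy_cvg; apply/cauchyP => e e0; have [x Fx] := Fc e e0; exists x.2.
  change (F [set y | ball x.2 e y.2]).
  by apply: filterS Fx => y /prod_ballE [_ h]; exact: h.
apply/cvg_ex; exists (lim (fst @ F), lim (snd @ F)).
apply/fcvg_ballP => e e0.
have h1 : F [set y | ball (lim (fst @ F)) e y.1].
  have := (fcvg_ballP (F := fst @ F) _).1 c1 e e0; apply; exact: fmap_filter.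
have h2 : F [set y | ball (lim (snd @ F)) e y.2].
  have := (fcvg_ballP (F := snd @ F) _).1 c2 e e0; apply; exact: fmap_filter.
by apply: filterS (filterI h1 h2) => y [? ?]; apply: prod_ballI.
Qed.
HB.instance Definition _ := Uniform_isComplete.Build (X * Y)%type prod_complete.
End ProdComplete.

Section Main.
Variable R : realType.

Lemma inf_ge0_gen (E : set R) : (forall x, E x -> 0 <= x) -> 0 <= inf E.
Proof.
move=> E0; case: (pselect (E !=set0)) => [ne|h]; first by apply: lb_le_inf.
have -> : E = set0 by apply/seteqP; split=> x Ex //; apply: h; exists x.
by rewrite inf0.
Qed.

Lemma inf_le_elt (E : set R) x : (forall y, E y -> 0 <= y) -> E x -> inf E <= x.
Proof. by move=> E0 Ex; apply: ge_inf => //; exists 0 => y /E0. Qed.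

Lemma dist_to_ge0 (Z : normedModType R) (z : Z) B : 0 <= dist_to z B.
Proof. by apply: inf_ge0_gen => _ [b _ <-]. Qed.

Lemma haus_ge0 (Z : normedModType R) (A B : set Z) : 0 <= hausdorff_dist A B.
Proof.
rewrite /hausdorff_dist le_max; apply/orP; left.
by apply: sup_ge0_gen => _ [a _ <-]; exact: dist_to_ge0.
Qed.

Lemma haus_le (Z : normedModType R) (A B : set Z) rho : 0 <= rho ->
  (forall a, A a -> exists2 b, B b & `|a - b| <= rho) ->
  (forall b, B b -> exists2 a, A a & `|b - a| <= rho) ->
  hausdorff_dist A B <= rho.
Proof.
move=> r0 hA hB; rewrite /hausdorff_dist ge_max; apply/andP; split;
  apply: sup_le_gen => // _ [a Aa <-].
  have [b Bb ab] := hA a Aa; apply: le_trans ab; apply: inf_le_elt.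
    by move=> _ [c _ <-].
  by exists b.
have [b Bb ab] := hB a Aa; apply: le_trans ab; apply: inf_le_elt.
  by move=> _ [c _ <-].
by exists b.
Qed.

Lemma haus_near (Z : normedModType R) (A B : set Z) a rho M : A a ->
  (forall a', A a' -> exists2 b, B b & `|a' - b| <= M) ->
  hausdorff_dist A B < rho -> exists2 b, B b & `|a - b| < rho.
Proof.
move=> Aa hM hr.
have hd : dist_to a B <= hausdorff_dist A B.
  rewrite /hausdorff_dist le_max; apply/orP; left; apply: ub_le_sup; last by exists a.
  exists M => _ [a' Aa' <-]; have [b Bb h] := hM a' Aa'.
  apply: le_trans h; apply: inf_le_elt; first by move=> _ [c _ <-].
  by exists b.
have dr : dist_to a B < rho by apply: le_lt_trans hr.
have [b0 Bb0 _] := hM a Aa.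
have hinf : has_inf [set `|a - b| | b in B].
  split; first by exists `|a - b0|, b0.
  by exists 0 => _ [c _ <-].
have dr' : 0 < rho - dist_to a B by rewrite subr_gt0.
have [_ [b Bb <-] hb] := inf_adherent dr' hinf.
by exists b => //; move: hb; rewrite /dist_to addrCA subrr addr0.
Qed.

Arguments haus_near {Z A B a rho M}.
Arguments haus_le {Z A B rho}.
Arguments haus_ge0 {Z}.

Section Iso.
Variables (X Z : normedModType R) (U : X -> Z).
Hypothesis iU : lin_isometry (E := nspace_of X) U.

Lemma iso_lin a u v : U (a *: u + v) = a *: U u + U v.
Proof. by case: iU => h _; apply: h. Qed.
Lemma iso_norm u : `|U u| = `|u|.
Proof. by case: iU => _ h; apply: h. Qed.
Lemma iso0 : U 0 = 0.
Proof. by apply/normr0_eq0; rewrite iso_norm normr0. Qed.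
Lemma isoB u v : U (u - v) = U u - U v.
Proof.
have := iso_lin (-1) v u; rewrite scaleN1r addrC => ->.
by rewrite scaleN1r addrC.
Qed.
End Iso.
Arguments iso_lin {X Z U}.
Arguments iso_norm {X Z U}.
Arguments iso0 {X Z U}.
Arguments isoB {X Z U}.


Section Dual.
Variables (X : normedModType R) (f : X -> R^o).
Hypothesis hf : pn_dom (dual_space X) f.

Lemma dual_lin a x y : f (a *: x + y) = a * f x + f y.
Proof. by case: hf => h _; apply: h. Qed.
Lemma dual0 : f 0 = 0.
Proof.
have := dual_lin (-1) 0 0; rewrite scaler0 addr0 mulN1r addNr => ->.
by [].
Qed.
Lemma dualZ a x : f (a *: x) = a * f x.
Proof. by have := dual_lin a x 0; rewrite !addr0 dual0 addr0. Qed.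

Lemma dual_bounded : exists C, 0 <= C /\ forall x, `|x| <= 1 -> `|f x| <= C.
Proof.
case: hf => _ hc.
have := hc 0 => /cvgrPdist_lt/(_ 1 ltr01) /nbhs_ballP [d d0 Hd].
have {}d0 : 0 < d := d0.
exists (2 / d); split; first by rewrite ltW // divr_gt0.
move=> x hx.
have hb : ball (0 : X) d ((d / 2) *: x).
  rewrite -ball_normE /ball_ /= sub0r normrN normrZ gtr0_norm ?divr_gt0 //.
  rewrite (le_lt_trans (ler_wpM2l _ hx)) ?ltW ?divr_gt0 // mulr1.
  lra.
have := Hd _ hb; rewrite /= dual0 sub0r normrN dualZ normrM gtr0_norm ?divr_gt0 // => h.
have -> : `|f x| = (d / 2 * `|f x|) * (2 / d) by field; rewrite gt_eqF.
rewrite -[X in _ <= X]mul1r ler_wpM2r ?ltW ?divr_gt0 //.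
Qed.

Lemma dual_norm_ge0 : 0 <= pn_norm (dual_space X) f.
Proof. by apply: sup_ge0_gen => _ [x _ <-]. Qed.

Lemma dual_normP x : `|f x| <= pn_norm (dual_space X) f * `|x|.
Proof.
have [->|x0] := eqVneq x 0; first by rewrite dual0 !normr0 mulr0.
have [C [C0 hC]] := dual_bounded.
have hu : `|f (`|x|^-1 *: x)| <= pn_norm (dual_space X) f.
  apply: ub_le_sup; first by exists C => _ [y hy <-]; exact: hC.
  exists (`|x|^-1 *: x) => //=.
  by rewrite normrZ normrV ?unitfE ?normr_eq0 // normr_id mulVf ?normr_eq0.
move: hu; rewrite dualZ normrM normrV ?unitfE ?normr_eq0 // normr_id.
by rewrite ler_pdivrMl ?normr_gt0 // mulrC.
Qed.
End Dual.
Arguments dual_lin {X f}.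
Arguments dual0 {X f}.
Arguments dualZ {X f}.
Arguments dual_bounded {X f}.
Arguments dual_norm_ge0 {X f}.
Arguments dual_normP {X f}.


Lemma ext_dual (X1 Y1 Z : normedModType R) (U1 : X1 -> Z) (V1 : Y1 -> Z) :
  lin_isometry (E := nspace_of X1) U1 -> lin_isometry (E := nspace_of Y1) V1 ->
  forall f, unit_ball (dual_space X1) f ->
  exists g, unit_ball (dual_space Y1) g /\ forall x y, `|f x - g y| <= `|U1 x - V1 y|.
Proof.
move=> iU iV f [hf fn].
pose G0 := [set p : Z * R | exists x, p = (U1 x, f x)].
have gG0 : good G0.
  split.
  - move=> z a b [x [-> ->]] [x' [ex ->]].
    have : `|x - x'| = 0 by rewrite -(iso_norm iU) (isoB iU) ex subrr normr0.
    by move/normr0_eq0/eqP; rewrite subr_eq0 => /eqP ->.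
  - move=> t _ _ _ _ [x [-> ->]] [w [-> ->]]; exists (t *: x + w).
    by rewrite (iso_lin iU) (dual_lin hf).
  - move=> _ _ [x [-> ->]]; rewrite (iso_norm iU).
    apply: le_trans (ler_norm _) _; apply: le_trans (dual_normP hf x) _.
    by rewrite ler_piMl.
have [F [Fl FG Fd]] := hahn_banach _ gG0 (ex_intro _ (U1 0, f 0) (ex_intro _ 0 erefl)).
have F0 : F 0 = 0.
  by have := Fl (-1) 0 0; rewrite scaler0 addr0 mulN1r addNr.
have FB z w : F (z - w) = F z - F w.
  by have := Fl (-1) w z; rewrite scaleN1r addrC => ->; rewrite mulN1r addrC.
have Fabs z : `|F z| <= `|z|.
  rewrite ler_norml Fd andbT lerNl.
  by have := Fd (- z); rewrite normrN; have := FB 0 z; rewrite sub0r F0 sub0r => ->.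
exists (fun y => F (V1 y)); split.
  split; first split.
  - by move=> a y y'; rewrite (iso_lin iV) Fl.
  - move=> y; apply/cvgrPdist_lt => e e0.
    apply: filterS (nbhsx_ballx y e e0) => y'; rewrite -ball_normE /ball_ /= => h.
    by rewrite -FB -(isoB iV) (le_lt_trans (Fabs _)) // (iso_norm iV).
  - apply: sup_le_gen => // _ [y hy <-] /=.
    by apply: le_trans (Fabs _) _; rewrite (iso_norm iV).
move=> x y; have -> : f x = F (U1 x) by rewrite (FG (U1 x) (f x)) //; exists x.
by rewrite -FB Fabs.
Qed.

Arguments ext_dual {X1 Y1 Z U1 V1}.

Lemma core (X Y Z : completeNormedModType R) (U : X -> Z) (V : Y -> Z) :
  lin_isometry (E := nspace_of X) U -> lin_isometry (E := nspace_of Y) V ->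
  kadets_dist (dual_space X) (dual_space Y) <=
    hausdorff_dist (U @` unit_ball (nspace_of X)) (V @` unit_ball (nspace_of Y)).
Proof.
move=> iU iV; set r := hausdorff_dist _ _.
apply/ler_addgt0Pr => e e0; set rho := r + e.
have rr : r < rho by rewrite /rho ltrDl.
have r0 : 0 <= rho by rewrite ltW // (le_lt_trans (haus_ge0 _ _) rr).
have P1 x : `|x| <= 1 -> exists2 y, `|y| <= 1 & `|U x - V y| <= rho.
  move=> hx.
  have hA : (U @` unit_ball (nspace_of X)) (U x) by exists x; first split.
  have hM : forall a', (U @` unit_ball (nspace_of X)) a' ->
      exists2 b, (V @` unit_ball (nspace_of Y)) b & `|a' - b| <= 1.
    move=> _ [x' [_ hx'] <-]; exists (V 0).
      by exists 0 => //; split => //=; rewrite normr0.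
    by rewrite (iso0 iV) subr0 (iso_norm iU).
  have [_ [y [_ hy] <-] h] := haus_near hA hM rr.
  by exists y => //; apply: ltW.
have rr' : hausdorff_dist (V @` unit_ball (nspace_of Y)) (U @` unit_ball (nspace_of X)) < rho.
  by rewrite {1}/hausdorff_dist maxC.
have P2 y : `|y| <= 1 -> exists2 x, `|x| <= 1 & `|U x - V y| <= rho.
  move=> hy.
  have hA : (V @` unit_ball (nspace_of Y)) (V y) by exists y; first split.
  have hM : forall a', (V @` unit_ball (nspace_of Y)) a' ->
      exists2 b, (U @` unit_ball (nspace_of X)) b & `|a' - b| <= 1.
    move=> _ [y' [_ hy'] <-]; exists (U 0).
      by exists 0 => //; split => //=; rewrite normr0.
    by rewrite (iso0 iU) subr0 (iso_norm iV).
  have [_ [x [_ hx] <-] h] := haus_near hA hM rr'.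
  by exists x => //; rewrite distrC; apply: ltW.
pose S (p : X * Y) := `|p.1| <= 1 /\ `|p.2| <= 1 /\ `|U p.1 - V p.2| <= rho.
pose W := bfun R (X * Y)%type.
pose phi1 (f : X -> R^o) : X * Y -> R^o := fun p => if `[< S p >] then f p.1 else 0.
pose phi2 (g : Y -> R^o) : X * Y -> R^o := fun p => if `[< S p >] then g p.2 else 0.
pose Phi (f : X -> R^o) : W := insubd 0 (phi1 f).
pose Psi (g : Y -> R^o) : W := insubd 0 (phi2 g).
have phi1b f : pn_dom (dual_space X) f -> phi1 f \in bnd R (X * Y)%type.
  move=> hf; have [C [C0 hC]] := dual_bounded hf; apply/bndP; exists C => p.
  rewrite /phi1; case: asboolP => [[h1 _]|_]; [exact: hC|by rewrite normr0].
have phi2b g : pn_dom (dual_space Y) g -> phi2 g \in bnd R (X * Y)%type.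
  move=> hg; have [C [C0 hC]] := dual_bounded hg; apply/bndP; exists C => p.
  rewrite /phi2; case: asboolP => [[_ [h2 _]]|_]; [exact: hC|by rewrite normr0].
have Phival f : pn_dom (dual_space X) f -> bf_val (Phi f) = phi1 f.
  by move=> hf; exact: (insubdK 0 (phi1b f hf)).
have Psival g : pn_dom (dual_space Y) g -> bf_val (Psi g) = phi2 g.
  by move=> hg; exact: (insubdK 0 (phi2b g hg)).
have iPhi : lin_isometry (E := dual_space X) Phi.
  split.
  - move=> a f g hf hg; apply: val_inj.
    have e1 : phi1 (a *: f + g) = a *: phi1 f + phi1 g.
      apply/funext => p.
      have -> : (a *: phi1 f + phi1 g) p = a * phi1 f p + phi1 g p by [].
      rewrite /phi1; case: asboolP => _; last by rewrite mulr0 addr0.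
      by [].
    rewrite /= /Phi e1 insubdK; last by rewrite rpredD ?rpredZ ?phi1b.
    change (a *: phi1 f + phi1 g = a *: bf_val (Phi f) + bf_val (Phi g)).
    by rewrite !Phival.
  - move=> f hf; rewrite bf_normE /bnorm Phival //=.
    congr sup; apply/seteqP; split.
    + move=> _ [p _ <-]; rewrite /phi1; case: asboolP => [[h1 _]|_]; first by exists p.1.
      exists 0; first by rewrite /= normr0.
      by rewrite (dual0 hf) normr0.
    + move=> _ [x hx <-]; have [y hy hxy] := P1 x hx.
      exists (x, y) => //; rewrite /phi1; case: asboolP => [_|h] //.
      by exfalso; apply: h; split => //; split.
have iPsi : lin_isometry (E := dual_space Y) Psi.
  split.
  - move=> a f g hf hg; apply: val_inj.
    have e1 : phi2 (a *: f + g) = a *: phi2 f + phi2 g.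
      apply/funext => p.
      have -> : (a *: phi2 f + phi2 g) p = a * phi2 f p + phi2 g p by [].
      rewrite /phi2; case: asboolP => _; last by rewrite mulr0 addr0.
      by [].
    rewrite /= /Psi e1 insubdK; last by rewrite rpredD ?rpredZ ?phi2b.
    change (a *: phi2 f + phi2 g = a *: bf_val (Psi f) + bf_val (Psi g)).
    by rewrite !Psival.
  - move=> f hf; rewrite bf_normE /bnorm Psival //=.
    congr sup; apply/seteqP; split.
    + move=> _ [p _ <-]; rewrite /phi2; case: asboolP => [[_ [h2 _]]|_]; first by exists p.2.
      exists 0; first by rewrite /= normr0.
      by rewrite (dual0 hf) normr0.
    + move=> _ [y hy <-]; have [x hx hxy] := P2 y hy.
      exists (x, y) => //; rewrite /phi2; case: asboolP => [_|h] //.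
      by exfalso; apply: h; split => //; split.
apply: (@le_trans _ _ (hausdorff_dist (Phi @` unit_ball (dual_space X))
                                      (Psi @` unit_ball (dual_space Y)))).
  apply: inf_le_elt; first by move=> _ [Z' [U' [V' [_ [_ ->]]]]]; exact: haus_ge0.
  by exists (CompleteNormedModule.clone R W _), Phi, Psi.
apply: haus_le => //.
- move=> _ [f hf <-]; have [g [hg hfg]] := ext_dual iU iV _ hf.
  exists (Psi g); first by exists g.
  rewrite bf_normE; apply: bnorm_le => // p.
  rewrite bf_valB (Phival _ hf.1) (Psival _ hg.1) /phi1 /phi2.
  case: asboolP => [[_ [_ h3]]|_]; first exact: le_trans (hfg _ _) h3.
  by rewrite subr0 normr0.
- move=> _ [g hg <-]; have [f [hf hgf]] := ext_dual iV iU _ hg.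
  exists (Phi f); first by exists f.
  rewrite bf_normE; apply: bnorm_le => // p.
  rewrite bf_valB (Phival _ hf.1) (Psival _ hg.1) /phi1 /phi2.
  case: asboolP => [[_ [_ h3]]|_]; first by apply: le_trans (hgf _ _) _; rewrite distrC.
  by rewrite subr0 normr0.
Qed.

End Main.

Local Close Scope classical_set_scope.

Theorem theorem4p3 (R : realType) (X Y : completeNormedModType R) :
  kadets_dist (dual_space X) (dual_space Y)
    <= 2 * kadets_dist (nspace_of X) (nspace_of Y).
Proof.
have h1 : kadets_dist (dual_space X) (dual_space Y) <= kadets_dist (nspace_of X) (nspace_of Y).
  rewrite [X in _ <= X]/kadets_dist; apply: lb_le_inf.
    exists (hausdorff_dist ((fun x : X => (x, 0 : Y)) @` unit_ball (nspace_of X))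
                           ((fun y : Y => (0 : X, y)) @` unit_ball (nspace_of Y))).
    exists (CompleteNormedModule.clone R (X * Y)%type _),
      (fun x : X => (x, 0 : Y)), (fun y : Y => (0 : X, y)).
    split; [|split=> //].
      split.
        move=> a u v _ _.
        by apply: injective_projections => /=; rewrite ?scaler0 ?addr0.
      move=> u _; change (Num.max `|u| `|0 : Y| = `|u|).
      by rewrite normr0 max_l.
    split.
      move=> a u v _ _.
      by apply: injective_projections => /=; rewrite ?scaler0 ?addr0.
    move=> u _; change (Num.max `|0 : X| `|u| = `|u|).
    by rewrite normr0 max_r.
  move=> _ [Z [U [V [iU [iV ->]]]]]; exact: core.
have h0 : 0 <= kadets_dist (nspace_of X) (nspace_of Y).
  by apply: inf_ge0_gen => _ [Z [U [V [_ [_ ->]]]]]; exact: haus_ge0.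
lra.
Qed.
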